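(* Consider $N$ agents $\mathcal{V}=\{1,\dots,N\}$ interacting over a fixed graph in which agent $i$ has the nonempty neighbor set $\mathcal{N}_i$ of cardinality $n_i$. Let $\beta\in[0,1)$ and let $(q_p(k))_{k\ge0}$ be any sequence with values in $\{-1,1\}$. The opinions evolve by $$\theta_i(k+1)=\theta_i(k)+\bigl(1-\theta_i(k)^2\bigr)\Bigl[\beta\bigl(q_p(k)-\theta_i(k)\bigr)+(1-\beta)\frac{1}{n_i}\sum_{j\in\mathcal{N}_i}\bigl(q_j(k)-\theta_i(k)\bigr)\Bigr],$$ with actions $q_j(k)=1$ if $\theta_j(k)>0$ or ($\theta_j(k)=0$ and $q_j(k-1)=1$), and $q_j(k)=-1$ if $\theta_j(k)<0$ or ($\theta_j(k)=0$ and $q_j(k-1)=-1$), and with $\theta_j(0)\in(-1,1)\setminus\{0\}$ for all $j$. If $A\subset\mathcal{V}$ is a strongly robust polarized cluster, then $q_i(k)=q_i(0)$ for all $i\in A$ and all $k\in\mathbb{N}$.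
   Context: The neighbor set $\mathcal{N}_i$ consists of the agents $j$ with $(j,i)$ an edge of the graph. A subset $A\subset\mathcal{V}$ is a strongly robust polarized cluster if (i) $q_i(0)=q_j(0)$ for all $i,j\in A$, and (ii) for all $i\in A$, $|\mathcal{N}_i\cap A|\ge|\mathcal{N}_i\setminus A|+\frac{\beta}{1-\beta}|\mathcal{N}_i|$. *)

(* Defs.v *)
From HB Require Import structures.
From mathcomp Require Import all_boot all_order all_algebra.
Set Implicit Arguments. Unset Strict Implicit. Unset Printing Implicit Defensive.
Import Order.TTheory GRing.Theory Num.Theory.
Local Open Scope ring_scope.

Definition nbrs (N : nat) (e : rel 'I_N) (i : 'I_N) : {set 'I_N} :=
  [set j | e j i].

Definition opinion_dynamics (R : realFieldType) (N : nat) (e : rel 'I_N)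
    (beta : R) (qp : nat -> R) (theta q : nat -> 'I_N -> R) : Prop :=
  forall (k : nat) (i : 'I_N),
    theta k.+1 i = theta k i + (1 - theta k i ^+ 2) *
      (beta * (qp k - theta k i)
       + (1 - beta) * (#|nbrs e i|%:R)^-1 *
           \sum_(j in nbrs e i) (q k j - theta k i)).

(* At k = 0, theta_j(0) <> 0, so q_j(0) is determined by the sign of theta_j(0). *)
Definition action_rule (R : realFieldType) (N : nat)
    (theta q : nat -> 'I_N -> R) : Prop :=
  (forall j : 'I_N,
     (0 < theta 0%N j -> q 0%N j = 1) /\ (theta 0%N j < 0 -> q 0%N j = -1)) /\
  (forall (k : nat) (j : 'I_N),
     ((0 < theta k.+1 j \/ (theta k.+1 j = 0 /\ q k j = 1)) -> q k.+1 j = 1) /\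
     ((theta k.+1 j < 0 \/ (theta k.+1 j = 0 /\ q k j = -1)) -> q k.+1 j = -1)).

Definition strongly_robust_polarized_cluster (R : realFieldType) (N : nat)
    (e : rel 'I_N) (beta : R) (q : nat -> 'I_N -> R) (A : {set 'I_N}) : Prop :=
  (forall i j, i \in A -> j \in A -> q 0%N i = q 0%N j) /\
  (forall i, i \in A ->
     (#|nbrs e i :&: A|%:R : R) >=
       #|nbrs e i :\: A|%:R + beta / (1 - beta) * #|nbrs e i|%:R).

(* Main.v *)
Require Import Defs.
From HB Require Import structures.
From mathcomp Require Import all_boot all_order all_algebra.
From mathcomp Require Import ring lra.
Import Order.TTheory GRing.Theory Num.Theory.
Local Open Scope ring_scope.

Lemma alg (R : realFieldType) (beta p a th : R): 0<=beta -> beta<1 -> (p = 1 \/ p = -1) ->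
  beta <= (1-beta) * a -> a <= 1 -> 0<=th -> th<=1 ->
  0 <= th + (1-th^+2)*(beta*(p-th) + (1-beta)*(a-th)) <= 1.
Proof.
move=> b0 b1 hp ha a1 t0 t1.
set M := beta * p + (1-beta) * a.
have -> : beta*(p-th) + (1-beta)*(a-th) = M - th by rewrite /M; ring.
have M0 : 0 <= M by rewrite /M; case: hp => ->; nra.
have M1 : M <= 1 by rewrite /M; case: hp => ->; nra.
have h1 : 0 <= 1 - th^+2 by nra.
apply/andP; split.
  have : (1-th^+2)*(-th) <= (1-th^+2)*(M-th) by apply: ler_wpM2l => //; lra.
  nra.
have : (1-th)*((1+th)*(M-th)) <= (1-th)*((1+th)*(1-th)).
  apply: ler_wpM2l; first lra. apply: ler_wpM2l; lra.
nra.
Qed.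

Lemma alg2 (R : realFieldType) (beta p s S n th : R): 0<=beta -> beta<1 ->
  (p = 1 \/ p = -1) -> (s = 1 \/ s = -1) -> 0 < n ->
  beta * n <= (1-beta) * (s * S) -> s * S <= n -> 0 <= s * th <= 1 ->
  0 <= s * (th + (1-th^+2)*(beta*(p-th) + (1-beta)*n^-1*(S - th*n))) <= 1.
Proof.
move=> b0 b1 hp hs n0 hS1 hS2 /andP[t0 t1].
have nz : n != 0 by rewrite gt_eqF.
set a := n^-1 * (s * S).
have Sa : s * S = a * n by rewrite /a mulrAC mulVf // mul1r.
have a1 : a <= 1.
  by rewrite -(ler_pM2r n0) -Sa mul1r.
have ha : beta <= (1-beta) * a.
  by rewrite -(ler_pM2r n0) -mulrA -Sa.
case: hs => hs; subst s.
- have -> : (1-beta)*n^-1*(S - th*n) = (1-beta)*(a - th).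
    by rewrite /a; field.
  rewrite mul1r; apply: alg => //; lra.
- have -> : (1-beta)*n^-1*(S - th*n) = - ((1-beta)*(a - - th)).
    by rewrite /a; field.
  have -> : -1 * (th + (1 - th ^+ 2) * (beta * (p - th) + - ((1 - beta) * (a - - th))))
     = - th + (1 - (- th) ^+ 2) * (beta * (- p - - th) + (1 - beta) * (a - - th)) by ring.
  apply: alg => //; lra.
Qed.

Theorem mainTheorem6 (R : realFieldType) (N : nat) (e : rel 'I_N)
    (beta : R) (qp : nat -> R) (theta q : nat -> 'I_N -> R) (A : {set 'I_N}) :
  (forall i : 'I_N, nbrs e i != set0) ->
  0 <= beta -> beta < 1 ->
  (forall k, qp k = 1 \/ qp k = -1) ->
  (forall j : 'I_N, -1 < theta 0%N j < 1 /\ theta 0%N j != 0) ->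
  action_rule theta q ->
  opinion_dynamics e beta qp theta q ->
  strongly_robust_polarized_cluster e beta q A ->
  forall i, i \in A -> forall k : nat, q k i = q 0%N i.
Proof.
move=> hne b0 b1 hqp h0 [a0 aS] hdyn [cq ccard] i iA.
have qpm : forall k j, q k j = 1 \/ q k j = -1.
  elim=> [|k IH] j.
    case: (h0 j) => _ nz; case: (a0 j) => ha hb.
    move: nz; rewrite neq_lt => /orP [lt|gt]; [right; exact: hb | left; exact: ha].
  case: (aS k j) => ha hb.
  case: (ltgtP (theta k.+1 j) 0) => [lt|gt|eq].
  - by right; apply: hb; left.
  - by left; apply: ha; left.
  - by case: (IH j) => ee; [left; apply: ha | right; apply: hb]; right; split.
have s2 : q 0%N i = 1 \/ q 0%N i = -1 by apply: qpm.
suff inv : forall k, forall j, j \in A -> q k j = q 0%N i /\ 0 <= q 0%N i * theta k j <= 1.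
  by move=> k; case: (inv k i iA).
elim=> [|k IH] j jA.
  split; first exact: cq.
  case: (h0 j) => /andP[l1 l2] nz; case: (a0 j) => ha hb.
  rewrite -(cq j i jA iA).
  by move: nz; rewrite neq_lt => /orP [lt|gt]; [rewrite (hb lt) | rewrite (ha gt)];
    apply/andP; split; lra.
set s := q 0%N i in s2 IH *.
case: (IH j jA) => qj tj.
set Nj := nbrs e j.
set S := \sum_(l in Nj) q k l.
have sumeq : \sum_(l in Nj) (q k l - theta k j) = S - theta k j * #|Nj|%:R.
  by rewrite sumrB sumr_const mulr_natr.
have n0 : 0 < (#|Nj|%:R : R) by rewrite ltr0n card_gt0; exact: hne.
have sS : s * S = \sum_(l in Nj :&: A) s * q k l + \sum_(l in Nj :\: A) s * q k l.
  by rewrite /S mulr_sumr (big_setID A).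
have sI : \sum_(l in Nj :&: A) s * q k l = #|Nj :&: A|%:R.
  rewrite (eq_bigr (fun _ => 1)) ?sumr_const // => l; rewrite inE => /andP[_ lA].
  by case: (IH l lA) => -> _; case: s2 => ->; ring.
have sD : - (#|Nj :\: A|%:R) <= \sum_(l in Nj :\: A) s * q k l.
  rewrite -sumr_const -sumrN; apply: ler_sum => l _.
  by case: s2 => ->; case: (qpm k l) => ->; lra.
have sU : s * S <= #|Nj|%:R.
  rewrite /S mulr_sumr -sumr_const; apply: ler_sum => l _.
  by case: s2 => ->; case: (qpm k l) => ->; lra.
have cc : (#|Nj|%:R : R) = #|Nj :&: A|%:R + #|Nj :\: A|%:R by rewrite -natrD cardsID.
have hc := ccard j jA.
have hb : beta * #|Nj|%:R <= (1 - beta) * (s * S).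
  have h1 : 0 < 1 - beta by lra.
  have : (1-beta) * (beta / (1 - beta) * #|Nj|%:R) <= (1-beta) * (s*S).
    apply: ler_wpM2l; first lra.
    have : 0 <= (#|Nj :\: A|%:R : R) by [].
    rewrite /Nj in sS sI sD cc *; lra.
  have -> : (1-beta) * (beta / (1 - beta) * #|Nj|%:R) = beta * #|Nj|%:R.
    by field; rewrite gt_eqF.
  done.
have key := @alg2 R beta (qp k) _ _ _ _ b0 b1 (hqp k) s2 n0 hb sU tj.
have ht : theta k.+1 j = theta k j + (1 - theta k j ^+ 2) * (beta * (qp k - theta k j)
   + (1 - beta) * (#|Nj|%:R)^-1 * (S - theta k j * #|Nj|%:R)).
  by rewrite hdyn -sumeq.
rewrite -ht in key.
split=> //.
case: (aS k j) => ha hb'.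
case: s2 => hs; rewrite hs in key qj *.
- apply: ha; case: (ltgtP (theta k.+1 j) 0) => [lt|gt|eq].
  + lra.
  + by left.
  + by right.
- apply: hb'; case: (ltgtP (theta k.+1 j) 0) => [lt|gt|eq].
  + by left.
  + lra.
  + by right.
Qed.
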